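(* Let $p,q\in(0,1)$. The following are equivalent: (a) $\mathbb{P}^{(1,1)}_{p,q}(\tau=+\infty)>0$; (b) there exist integers $N\ge1$ and $T\ge1$ such that $\mathbb{E}^{(N,N)}_{p,q}\big[\lfloor Z_T/N\rfloor\big]>1$.
   Context: Cooperative model: for $p,q\in(0,1)$, a Markov chain $(X_n,Y_n)_{n\ge0}$ on $\mathbb{N}^2$ whose transition law from state $(x,y)$ is $\mu_{(x,y)}=\mathrm{Bin}(2,q)^{*(x+y)}\otimes\mathrm{Bin}(2,p)^{*\min(x,y)}$, i.e. given the past, $X_{n+1}\sim\mathrm{Bin}(2(X_n+Y_n),q)$ and $Y_{n+1}\sim\mathrm{Bin}(2\min(X_n,Y_n),p)$ are independent. $\mathbb{P}^{(x,y)}_{p,q}$ (with expectation $\mathbb{E}^{(x,y)}_{p,q}$) denotes the law of this process started from $(x,y)$. $Z_n=\min(X_n,Y_n)$ and $\tau=\inf\{n\ge0: Z_n=0\}$. *)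

(* Defs.v *)
From HB Require Import structures.
From mathcomp Require Import all_boot all_order all_algebra.
From mathcomp Require Import all_classical all_reals all_analysis.
Set Implicit Arguments. Unset Strict Implicit. Unset Printing Implicit Defensive.
Import Order.TTheory GRing.Theory Num.Theory numFieldNormedType.Exports.
Local Open Scope ring_scope.

(* Cooperative model: Markov chain (X_n, Y_n) on nat * nat with
   X_{n+1} ~ Bin(2(X_n+Y_n), q), Y_{n+1} ~ Bin(2 min(X_n,Y_n), p), independent.
   Note Bin(2,q)^{*(x+y)} = Bin(2(x+y), q). *)

Section Coop.
Variable R : realType.

(* pmf of Bin(n, r) at k (zero for k > n since 'C(n,k) = 0). *)
Definition binpmf (r : R) (n k : nat) : R :=
  ('C(n, k))%:R * r ^+ k * (1 - r) ^+ (n - k).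

Definition coop_trans (p q : R) (s s' : nat * nat) : R :=
  binpmf q (2 * (s.1 + s.2)) s'.1 * binpmf p (2 * minn s.1 s.2) s'.2.

(* (P f)(s) = E^s[f(X_1,Y_1)]; the transition law from s is supported on
   [0, 2(x+y)] x [0, 2 min(x,y)], so this finite sum is the full expectation. *)
Definition coop_step (p q : R) (f : nat * nat -> R) (s : nat * nat) : R :=
  \sum_(i < (2 * (s.1 + s.2)).+1) \sum_(j < (2 * minn s.1 s.2).+1)
     coop_trans p q s (i : nat, j : nat) * f (i : nat, j : nat).

Definition coop_expect (p q : R) (T : nat) (f : nat * nat -> R) (s : nat * nat) : R :=
  iter T (coop_step p q) f s.

Definition Zof (s : nat * nat) : nat := minn s.1 s.2.

(* P^s(tau > n) = P^s(Z_0 > 0, ..., Z_n > 0) *)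
Fixpoint coop_surv (p q : R) (n : nat) (s : nat * nat) : R :=
  match n with
  | 0 => (0 < Zof s)%N%:R
  | n'.+1 => (0 < Zof s)%N%:R * coop_step p q (coop_surv p q n') s
  end.

(* P^s(tau = +oo) = lim_n P^s(tau > n)  (continuity from above) *)
Definition coop_tau_inf (p q : R) (s : nat * nat) : R :=
  limn (fun n => coop_surv p q n s).

End Coop.

(* Main.v *)
Require Import Defs.
From HB Require Import structures.
From mathcomp Require Import all_boot all_order all_algebra.
From mathcomp Require Import all_classical all_reals all_analysis.
From mathcomp Require Import ring lra zify.
Import Order.TTheory GRing.Theory Num.Theory numFieldNormedType.Exports.
Local Open Scope ring_scope.

Definition Ebin {R : realType} (r : R) (a : nat) (h : nat -> R) : R :=
  \sum_(i < a.+1) binpmf r a i * h i.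

Lemma binpmf_ge0 {R : realType} (r : R) a i : 0 <= r <= 1 -> 0 <= binpmf r a i.
Proof.
case/andP=> r0 r1; rewrite /binpmf; apply: mulr_ge0; first apply: mulr_ge0.
- exact: ler0n.
- exact: exprn_ge0.
- by apply: exprn_ge0; rewrite subr_ge0.
Qed.

Lemma binpmf_gt0 {R : realType} (r : R) a i : 0 < r < 1 -> (i <= a)%N -> 0 < binpmf r a i.
Proof.
case/andP=> r0 r1 ia; rewrite /binpmf; apply: mulr_gt0; first apply: mulr_gt0.
- by rewrite ltr0n bin_gt0.
- exact: exprn_gt0.
- by apply: exprn_gt0; rewrite subr_gt0.
Qed.

Lemma Ebin_ext {R : realType} (r : R) a h k : (forall i, h i = k i) -> Ebin r a h = Ebin r a k.
Proof. by move=> hk; apply: eq_bigr => i _; rewrite hk. Qed.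

Lemma Ebin_le {R : realType} (r : R) a h k : 0 <= r <= 1 ->
  (forall i, h i <= k i) -> Ebin r a h <= Ebin r a k.
Proof.
move=> r01 hk; apply: ler_sum => i _; apply: ler_wpM2l; first exact: binpmf_ge0.
exact: hk.
Qed.

Lemma Ebin_scale {R : realType} (r : R) a c h :
  Ebin r a (fun i => c * h i) = c * Ebin r a h.
Proof. rewrite /Ebin big_distrr; apply: eq_bigr => i _ /=; ring. Qed.

Lemma Ebin_add {R : realType} (r : R) a h k :
  Ebin r a (fun i => h i + k i) = Ebin r a h + Ebin r a k.
Proof. rewrite /Ebin -big_split; apply: eq_bigr => i _ /=; ring. Qed.

Lemma Ebin0 {R : realType} (r : R) h : Ebin r 0 h = h 0%N.
Proof. rewrite /Ebin big_ord1 /binpmf /=. rewrite bin0 subnn !expr0 mulr1. simpl. ring. Qed.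

Lemma Ebin_pascal {R : realType} (r : R) a h :
  Ebin r a.+1 h = r * Ebin r a (fun i => h i.+1) + (1 - r) * Ebin r a h.
Proof.
rewrite /Ebin big_ord_recl /=.
under eq_bigr => i _ do rewrite /binpmf /bump /= add1n binS natrD !mulrDl.
rewrite big_split /=.
have -> : \sum_(i < a.+1) 'C(a, i)%:R * r ^+ i.+1 * (1 - r) ^+ (a.+1 - i.+1) * h i.+1
   = r * \sum_(i < a.+1) binpmf r a i * h i.+1.
  rewrite big_distrr; apply: eq_bigr => i _; rewrite /binpmf subSS exprS /=; ring. 
have -> : (1 - r) * \sum_(i < a.+1) binpmf r a i * h i = binpmf r a.+1 0 * h 0%N +
   \sum_(i < a.+1) 'C(a, i.+1)%:R * r ^+ i.+1 * (1 - r) ^+ (a.+1 - i.+1) * h i.+1.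
  rewrite big_ord_recl [in RHS]big_ord_recr /= bin_small // !mul0r addr0.
  rewrite mulrDr big_distrr /=; congr (_ + _).
    by rewrite /binpmf !bin0 subn0 subn0 exprS /=; ring.
  apply: eq_bigr => i _; rewrite /binpmf /bump /= add1n subSS.
  have -> : (a - i = (a - i.+1).+1)%N by have := ltn_ord i; lia.
  rewrite !exprS /=; ring.
ring.
Qed.

Lemma Ebin_const {R : realType} (r : R) a c : Ebin r a (fun _ => c) = c.
Proof.
elim: a => [|a IH]; first by rewrite Ebin0.
rewrite Ebin_pascal IH; ring.
Qed.

Lemma Ebin_conv {R : realType} (r : R) a a' h :
  Ebin r (a + a') h = Ebin r a (fun i => Ebin r a' (fun j => h (i + j)%N)).
Proof.
elim: a h => [|a IH] h.
  by rewrite add0n Ebin0; apply: Ebin_ext => j; rewrite add0n.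
rewrite addSn Ebin_pascal !IH Ebin_pascal; by [].
Qed.

Lemma Ebin_swap {R : realType} (r s : R) a b k :
  Ebin r a (fun i => Ebin s b (fun j => k i j)) =
  Ebin s b (fun j => Ebin r a (fun i => k i j)).
Proof.
rewrite /Ebin; under eq_bigr do rewrite big_distrr.
rewrite exchange_big; apply: eq_bigr => j _; rewrite big_distrr.
by apply: eq_bigr => i _ /=; ring.
Qed.

Lemma Ebin_term {R : realType} (r : R) a h (i : nat) : 0 <= r <= 1 ->
  (forall i, 0 <= h i) -> (i <= a)%N -> binpmf r a i * h i <= Ebin r a h.
Proof.
move=> r01 h0 ia; have ia' : (i < a.+1)%N by [].
rewrite /Ebin (bigD1 (Ordinal ia')) //= lerDl.
by apply: sumr_ge0 => j _; apply: mulr_ge0; [exact: binpmf_ge0|exact: h0].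
Qed.

Lemma Ebin_01 {R : realType} (r : R) a h : 0 <= r <= 1 ->
  (forall i, 0 <= h i <= 1) -> 0 <= Ebin r a h <= 1.
Proof.
move=> r01 h01; apply/andP; split.
  rewrite -(Ebin_const r a 0); apply: Ebin_le => // i; by case/andP: (h01 i).
rewrite -[X in _ <= X](Ebin_const r a 1); apply: Ebin_le => // i; by case/andP: (h01 i).
Qed.

Lemma Ebin_at0 {R : realType} (r : R) a h : Ebin r a (fun j => (j == 0)%N%:R * h j) = (1 - r) ^+ a * h 0%N.
Proof.
rewrite /Ebin big_ord_recl /= big1 ?addr0.
  by rewrite /binpmf bin0 expr0 subn0 /=; ring.
by move=> i _; rewrite /bump /= mul0r mulr0.
Qed.

Lemma step_Ebin {R : realType} (p q : R) f s :
  coop_step p q f s = Ebin q (2 * (s.1 + s.2)) (fun i => Ebin p (2 * minn s.1 s.2) (fun j => f (i, j))).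
Proof.
rewrite /coop_step /Ebin; apply: eq_bigr => i _; rewrite big_distrr; apply: eq_bigr => j _.
by rewrite /coop_trans /= mulrA.
Qed.

Lemma Ebin_scaler {R : realType} (r : R) a c h :
  Ebin r a (fun i => h i * c) = Ebin r a h * c.
Proof. by rewrite mulrC -Ebin_scale; apply: Ebin_ext => i; rewrite mulrC. Qed.

Definition Gf {R : realType} (p q : R) (g : nat * nat -> R) a b :=
  Ebin q a (fun i => Ebin p b (fun j => g (i, j))).

Definition goodf {R : realType} (g : nat * nat -> R) :=
  (forall s, 0 <= g s <= 1) /\ (forall s t, g (s.1 + t.1, s.2 + t.2)%N <= g s * g t).

Lemma Gf_01 {R : realType} (p q : R) g a b : 0 <= p <= 1 -> 0 <= q <= 1 ->
  goodf g -> 0 <= Gf p q g a b <= 1.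
Proof.
move=> p01 q01 [g01 _]; apply: Ebin_01 => // i; exact: Ebin_01.
Qed.

Lemma Gf_sub {R : realType} (p q : R) g a a' b b' : 0 <= p <= 1 -> 0 <= q <= 1 ->
  goodf g -> Gf p q g (a + a') (b + b') <= Gf p q g a b * Gf p q g a' b'.
Proof.
move=> p01 q01 [g01 gsub].
rewrite /Gf Ebin_conv.
have -> : Ebin q a (fun i1 => Ebin q a' (fun i2 => Ebin p (b + b') (fun j => g ((i1 + i2)%N, j)))) =
  Ebin q a (fun i1 => Ebin p b (fun j1 => Ebin q a' (fun i2 => Ebin p b' (fun j2 => g ((i1+i2)%N, (j1+j2)%N))))).
  apply: Ebin_ext => i1; rewrite [RHS]Ebin_swap; apply: Ebin_ext => i2; exact: Ebin_conv.
rewrite -Ebin_scaler; apply: Ebin_le => // i1.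
rewrite -Ebin_scaler; apply: Ebin_le => // j1.
rewrite -Ebin_scale; apply: Ebin_le => // i2.
rewrite -Ebin_scale; apply: Ebin_le => // j2.
exact: (gsub (i1, j1) (i2, j2)).
Qed.

Lemma Gf_monob {R : realType} (p q : R) g a b d : 0 <= p <= 1 -> 0 <= q <= 1 ->
  goodf g -> Gf p q g a (b + d) <= Gf p q g a b.
Proof.
move=> p01 q01 gg.
have := Gf_sub p q g a 0 b d p01 q01 gg; rewrite addn0 => /le_trans; apply.
have /andP[h0 h1] := Gf_01 p q g a b p01 q01 gg.
have /andP[k0 k1] := Gf_01 p q g 0 d p01 q01 gg.
by rewrite ler_piMr.
Qed.

Lemma step_good {R : realType} (p q : R) g : 0 <= p <= 1 -> 0 <= q <= 1 ->
  goodf g -> goodf (coop_step p q g).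
Proof.
move=> p01 q01 gg; split.
  by move=> s; rewrite step_Ebin; exact: (Gf_01 p q g _ _ p01 q01 gg).
move=> s t; rewrite !step_Ebin /=.
rewrite -!/(Gf p q g _ _).
have -> : (2 * (s.1 + t.1 + (s.2 + t.2)) = 2 * (s.1 + s.2) + 2 * (t.1 + t.2))%N by lia.
have -> : (2 * minn (s.1 + t.1) (s.2 + t.2) = (2 * minn s.1 s.2 + 2 * minn t.1 t.2) +
   (2 * minn (s.1 + t.1) (s.2 + t.2) - (2 * minn s.1 s.2 + 2 * minn t.1 t.2)))%N by lia.
apply: le_trans (Gf_monob p q g _ _ _ p01 q01 gg) _.
exact: Gf_sub.
Qed.

Lemma iter_good {R : realType} (p q : R) g T : 0 <= p <= 1 -> 0 <= q <= 1 ->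
  goodf g -> goodf (coop_expect p q T g).
Proof.
move=> p01 q01 gg; elim: T => [|T IH] //.
rewrite /coop_expect iterS; exact: step_good.
Qed.

Lemma Ebin_lin {R : realType} (r : R) n a b c h k :
  Ebin r n (fun i => a + b * h i + c * k i) = a + b * Ebin r n h + c * Ebin r n k.
Proof. by rewrite !Ebin_add Ebin_const !Ebin_scale. Qed.

Lemma step_ext {R : realType} (p q : R) f f' s : (forall s, f s = f' s) ->
  coop_step p q f s = coop_step p q f' s.
Proof. by move=> e; rewrite !step_Ebin; apply: Ebin_ext => i; apply: Ebin_ext => j. Qed.

Lemma step_le {R : realType} (p q : R) f f' s : 0 <= p <= 1 -> 0 <= q <= 1 ->
  (forall s, f s <= f' s) -> coop_step p q f s <= coop_step p q f' s.
Proof. by move=> p01 q01 e; rewrite !step_Ebin; apply: Ebin_le => // i; apply: Ebin_le. Qed.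

Lemma step_lin {R : realType} (p q : R) a b c f g s :
  coop_step p q (fun s => a + b * f s + c * g s) s =
  a + b * coop_step p q f s + c * coop_step p q g s.
Proof.
rewrite !step_Ebin.
under Ebin_ext => i do rewrite Ebin_lin.
by rewrite Ebin_lin.
Qed.

Lemma expect_ext {R : realType} (p q : R) T f f' s : (forall s, f s = f' s) ->
  coop_expect p q T f s = coop_expect p q T f' s.
Proof.
elim: T s => [|T IH] s e; first exact: e.
rewrite /coop_expect !iterS; apply: step_ext => s'; exact: IH.
Qed.

Lemma expect_le {R : realType} (p q : R) T f f' s : 0 <= p <= 1 -> 0 <= q <= 1 ->
  (forall s, f s <= f' s) -> coop_expect p q T f s <= coop_expect p q T f' s.
Proof.
move=> p01 q01; elim: T s => [|T IH] s e; first exact: e.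
rewrite /coop_expect !iterS; apply: step_le => // s'; exact: IH.
Qed.

Lemma expect_lin {R : realType} (p q : R) T a b c f g s :
  coop_expect p q T (fun s => a + b * f s + c * g s) s =
  a + b * coop_expect p q T f s + c * coop_expect p q T g s.
Proof.
elim: T s => [|T IH] s; first by [].
rewrite /coop_expect !iterS.
rewrite (step_ext _ _ _ (fun s => a + b * coop_expect p q T f s + c * coop_expect p q T g s)).
  exact: step_lin.
exact: IH.
Qed.

Lemma expect_01 {R : realType} (p q : R) T f s : 0 <= p <= 1 -> 0 <= q <= 1 ->
  (forall s, 0 <= f s <= 1) -> 0 <= coop_expect p q T f s <= 1.
Proof.
move=> p01 q01; elim: T s => [|T IH] s f01; first exact: f01.
rewrite /coop_expect iterS step_Ebin; apply: Ebin_01 => // i; apply: Ebin_01 => // j.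
exact: IH.
Qed.

Lemma expectS {R : realType} (p q : R) T f s :
  coop_expect p q T.+1 f s = coop_expect p q T (coop_step p q f) s.
Proof. by rewrite /coop_expect iterSr. Qed.

Lemma expectD {R : realType} (p q : R) m n f s :
  coop_expect p q (m + n) f s = coop_expect p q m (coop_expect p q n f) s.
Proof. by rewrite /coop_expect iterD. Qed.

Definition ind {R : realType} (s : nat * nat) : R := (0 < Zof s)%N%:R.

Lemma step_dead {R : realType} (p q : R) f s : Zof s = 0%N -> (forall i, f (i, 0%N) = 0) ->
  coop_step p q f s = 0.
Proof.
rewrite /Zof => z0 f0; rewrite step_Ebin z0 muln0.
under Ebin_ext => i do rewrite Ebin0 f0.
exact: Ebin_const.
Qed.

Lemma expect_dead {R : realType} (p q : R) T s : Zof s = 0%N -> coop_expect p q T (@ind R) s = 0.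
Proof.
elim: T s => [|T IH] s z0; first by rewrite /coop_expect /= /ind z0.
rewrite /coop_expect iterS; apply: step_dead => // i.
by apply: IH; rewrite /Zof minn0.
Qed.

Lemma surv_expect {R : realType} (p q : R) n s :
  coop_surv p q n s = coop_expect p q n (@ind R) s.
Proof.
elim: n s => [|n IH] s; first by [].
rewrite /= (step_ext _ _ _ _ _ IH).
case: (posnP (Zof s)) => z.
  rewrite mul0r; symmetry; apply: step_dead => // i.
  by apply: expect_dead; rewrite /Zof minn0.
by rewrite mul1r.
Qed.

Lemma ind_01 {R : realType} s : 0 <= @ind R s <= 1.
Proof. by rewrite /ind; case: (0 < Zof s)%N; rewrite /= ?lexx ?ler01. Qed.

Lemma step_ind_le {R : realType} (p q : R) s : 0 <= p <= 1 -> 0 <= q <= 1 ->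
  coop_step p q (@ind R) s <= ind s.
Proof.
move=> p01 q01; case: (posnP (Zof s)) => z.
  by rewrite step_dead // /ind ?z // /Zof minn0.
have /andP[_ H] : 0 <= coop_step p q (@ind R) s <= 1.
  by rewrite step_Ebin; apply: Ebin_01 => // i; apply: Ebin_01 => // j; exact: ind_01.
by rewrite {2}/ind z.
Qed.

Lemma surv_decr {R : realType} (p q : R) s m n : 0 <= p <= 1 -> 0 <= q <= 1 ->
  (m <= n)%N -> coop_expect p q n (@ind R) s <= coop_expect p q m (@ind R) s.
Proof.
move=> p01 q01 /subnK <-; elim: (n - m)%N => [|k IH] //.
rewrite addSn expectS; apply: le_trans IH.
by apply: expect_le => // s'; exact: step_ind_le.
Qed.

Lemma goodf_pow {R : realType} (r : R) N : 0 <= r <= 1 -> (0 < N)%N ->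
  goodf (fun s => r ^+ (Zof s %/ N)).
Proof.
move=> /andP[r0 r1] N0; split.
  by move=> s; rewrite exprn_ge0 // exprn_ile1.
move=> s t; rewrite -exprD; apply: ler_wiXn2l => //.
rewrite /Zof /=; apply: leq_trans (_ : (minn s.1 s.2 + minn t.1 t.2) %/ N <= _)%N.
  by rewrite divnD // leq_addr.
by apply: leq_div2r; lia.
Qed.

Lemma good_mono {R : realType} (h : nat * nat -> R) s d1 d2 : goodf h ->
  h (s.1 + d1, s.2 + d2)%N <= h s.
Proof.
move=> [h01 hs]; apply: le_trans (hs s (d1, d2)) _.
have /andP[a0 a1] := h01 s; have /andP[b0 b1] := h01 (d1, d2).
by rewrite ler_piMr.
Qed.

Lemma good_mul {R : realType} (h : nat * nat -> R) a b k : goodf h ->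
  h (k * a, k * b)%N <= h (a, b) ^+ k.
Proof.
move=> [h01 hs]; elim: k => [|k IH].
  by rewrite expr0 !mul0n; case/andP: (h01 (0, 0)%N).
rewrite !mulSn exprS; apply: le_trans (hs (a, b) (k * a, k * b)%N) _.
by apply: ler_wpM2l => //; case/andP: (h01 (a, b)).
Qed.

Lemma good_bound {R : realType} (h : nat * nat -> R) N s : goodf h ->
  h s <= h (N, N) ^+ (Zof s %/ N).
Proof.
move=> gh; set k := (Zof s %/ N)%N.
have e1 : (k * N <= s.1)%N by rewrite /k /Zof; apply: leq_trans (leq_trunc_div _ _) _; exact: geq_minl.
have e2 : (k * N <= s.2)%N by rewrite /k /Zof; apply: leq_trans (leq_trunc_div _ _) _; exact: geq_minr.
have -> : s = ((k * N, k * N).1 + (s.1 - k * N), (k * N, k * N).2 + (s.2 - k * N))%N.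
  by clearbody k; case: s e1 e2 => a b /= e1 e2; rewrite !subnKC.
apply: le_trans (good_mono _ _ _ _ gh) _.
exact: good_mul.
Qed.

Lemma Ebin_ge0 {R : realType} (r : R) a h : 0 <= r <= 1 -> (forall i, 0 <= h i) -> 0 <= Ebin r a h.
Proof. by move=> r01 h0; rewrite -(Ebin_const r a 0); apply: Ebin_le. Qed.

Lemma reach1 {R : realType} (p q : R) f b : 0 < p < 1 -> 0 < q < 1 -> (forall s, 0 <= f s) ->
  exists2 t, 0 < t & t * f (2 * b, 2 * b)%N <= coop_step p q f (b, b).
Proof.
move=> p01 q01 f0.
have p01' : 0 <= p <= 1 by case/andP: p01 => a c; rewrite ltW // ltW.
have q01' : 0 <= q <= 1 by case/andP: q01 => a c; rewrite ltW // ltW.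
exists (binpmf q (2 * (b + b)) (2 * b) * binpmf p (2 * minn b b) (2 * b)).
  by apply: mulr_gt0; apply: binpmf_gt0 => //; rewrite ?minnn //; lia.
rewrite step_Ebin /= -mulrA.
apply: le_trans (Ebin_term _ _ _ (2 * b) q01' _ _); last by lia.
  apply: ler_wpM2l; first exact: binpmf_ge0.
  apply: Ebin_term => //; rewrite minnn //.
by move=> i; apply: Ebin_ge0.
Qed.

Lemma reach {R : realType} (p q : R) k : 0 < p < 1 -> 0 < q < 1 -> forall f a, (forall s, 0 <= f s) ->
  exists2 c, 0 < c & c * f (2 ^ k * a, 2 ^ k * a)%N <= coop_expect p q k f (a, a).
Proof.
move=> p01 q01; elim: k => [|k IH] f a f0.
  by exists 1; rewrite // mul1r !mul1n.
have p01' : 0 <= p <= 1 by case/andP: p01 => x y; rewrite ltW // ltW.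
have q01' : 0 <= q <= 1 by case/andP: q01 => x y; rewrite ltW // ltW.
have [t t0 Ht] := reach1 p q f (2 ^ k * a)%N p01 q01 f0.
have sf0 : forall s, 0 <= coop_step p q f s.
  by move=> s; rewrite step_Ebin; apply: Ebin_ge0 => // i; apply: Ebin_ge0.
have [c c0 Hc] := IH _ a sf0.
exists (c * t); first exact: mulr_gt0.
rewrite expectS; apply: le_trans Hc; rewrite -mulrA; apply: ler_wpM2l; first exact: ltW.
by rewrite expnS -mulnA.
Qed.

Lemma bern2 {R : realType} (e : R) k : 0 <= e <= 1 ->
  (1 - e) ^+ k <= 1 - k%:R * e + k%:R ^+ 2 * e ^+ 2.
Proof.
move=> /andP[e0 e1]; elim: k => [|k IH]; first by rewrite expr0 mul0r subr0 expr0n /= mul0r addr0.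
rewrite exprS; apply: le_trans (_ : (1 - e) * (1 - k%:R * e + k%:R ^+ 2 * e ^+ 2) <= _).
  by apply: ler_wpM2l => //; rewrite subr_ge0.
have k0 : 0 <= k%:R :> R by [].
rewrite -natr1; nra.
Qed.

Lemma exists_pow_lt {R : realType} (x e : R) : 0 <= x < 1 -> 0 < e ->
  exists n, (1 <= n)%N /\ x ^+ n < e.
Proof.
move=> /andP[x0 x1] e0.
have nx : `|x| < 1 by rewrite ger0_norm.
have := cvgr_lt 0 (cvg_expr nx) e e0.
case=> N _ HN; exists N.+1; split => //; apply: HN => /=; exact: leqnSn.
Qed.

Lemma u_cvg {R : realType} (p q : R) s : 0 <= p <= 1 -> 0 <= q <= 1 ->
  cvgn (fun n => coop_surv p q n s).
Proof.
move=> p01 q01; apply: nonincreasing_is_cvgn.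
  by move=> m n mn; rewrite !surv_expect; exact: surv_decr.
exists 0 => _ [n _ <-]; rewrite surv_expect.
by case/andP: (expect_01 p q n (@ind R) s p01 q01 ind_01).
Qed.

Lemma dir_b_a {R : realType} (p q : R) (hp : 0 < p < 1) (hq : 0 < q < 1) N T :
  (1 <= N)%N -> (1 <= T)%N ->
  1 < coop_expect p q T (fun s => (Zof s %/ N)%N%:R) (N, N) ->
  0 < coop_tau_inf p q (1%N, 1%N).
Proof.
move=> N0 T0 Hm.
have p01 : 0 <= p <= 1 by case/andP: hp => x y; rewrite ltW // ltW.
have q01 : 0 <= q <= 1 by case/andP: hq => x y; rewrite ltW // ltW.
set phi := (fun s => (Zof s %/ N)%N%:R) : nat * nat -> R.
set m := coop_expect p q T phi (N, N) in Hm.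
set M2 := coop_expect p q T (fun s => phi s ^+ 2) (N, N).
have mM : m <= M2.
  apply: expect_le => // s; rewrite /phi -natrX ler_nat; nia.
have M2pos : 0 < M2 by apply: lt_le_trans mM; apply: lt_trans Hm.
set e := (m - 1) / M2.
have e0 : 0 < e by apply: divr_gt0 => //; rewrite subr_gt0.
have e1 : e < 1 by rewrite ltr_pdivrMr // mul1r; lra.
have e01 : 0 <= e <= 1 by rewrite !ltW.
set rho := 1 - e.
have r01 : 0 <= rho <= 1 by rewrite /rho; apply/andP; split; lra.
set g := fun s => rho ^+ (Zof s %/ N).
have gg : goodf g := goodf_pow rho N r01 N0.
have hg := iter_good p q g T p01 q01 gg.
have hNN : coop_expect p q T g (N, N) <= rho.
  apply: le_trans (_ : coop_expect p q T (fun s => 1 + (- e) * phi s + (e ^+ 2) * phi s ^+ 2) (N, N) <= _).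
    apply: expect_le => // s; rewrite /g /phi; apply: le_trans (bern2 _ _ e01) _.
    by rewrite le_eqVlt; apply/orP; left; apply/eqP; ring.
  rewrite (expect_lin p q T 1 (- e) (e ^+ 2) phi (fun s => phi s ^+ 2)) -/m -/M2.
  have eM : e * M2 = m - 1 by rewrite /e divfK // gt_eqF.
  have : e ^+ 2 * M2 = e * (m - 1) by rewrite -eM; ring.
  rewrite /rho; nra.
have super : forall s, coop_expect p q T g s <= g s.
  move=> s; apply: le_trans (good_bound _ N s hg) _; rewrite /g.
  apply: lerXn2r; rewrite ?nnegrE //; first by case/andP: (hg.1 (N, N)).
  by case/andP: r01.
have iterj : forall j s, coop_expect p q (j * T) g s <= g s.
  elim=> [|j IH] s; first by rewrite mul0n.
  rewrite mulSn expectD; apply: le_trans (super s); exact: expect_le.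
have lowb : forall n s, 1 - g s <= coop_expect p q n (@ind R) s.
  move=> n s; apply: le_trans (surv_decr p q s n (n * T) p01 q01 _); last by rewrite leq_pmulr.
  apply: le_trans (_ : 1 - coop_expect p q (n * T) g s <= _).
    by have := iterj n s; lra.
  have := expect_lin p q (n * T) 1 (-1) 0 g g s.
  rewrite mulN1r mul0r addr0 => <-; apply: expect_le => // s'.
  rewrite /ind /g mulN1r mul0r addr0; case: (posnP (Zof s')) => z.
    by rewrite z div0n expr0 subrr.
  rewrite lerBlDr lerDl; apply: exprn_ge0; by case/andP: r01.
have f0 : forall s, 0 <= 1 - g s.
  by move=> s; rewrite subr_ge0; case/andP: (gg.1 s).
have [c c0 Hc] := reach p q N hp hq (fun s => 1 - g s) 1 f0.
have ge : e <= 1 - g (2 ^ N * 1, 2 ^ N * 1)%N.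
  rewrite /g /rho; have : (1 <= Zof (2 ^ N * 1, 2 ^ N * 1)%N %/ N)%N.
    rewrite /Zof /= minnn muln1 divn_gt0 //; exact: ltnW (ltn_expl _ _).
  move=> k1; have : (1 - e) ^+ (Zof (2 ^ N * 1, 2 ^ N * 1)%N %/ N) <= (1 - e) ^+ 1.
    by apply: ler_wiXn2l => //; lra.
  rewrite expr1; lra.
rewrite /coop_tau_inf; apply: lt_le_trans (_ : 0 < c * e) _; first exact: mulr_gt0.
apply: limr_ge; first exact: u_cvg.
exists N => // n /= Nn.
rewrite surv_expect -(subnKC Nn) expectD.
apply: le_trans (_ : c * (1 - g (2 ^ N * 1, 2 ^ N * 1)%N) <= _).
  by apply: ler_wpM2l => //; exact: ltW.
apply: le_trans Hc _; apply: expect_le => // s; exact: lowb.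
Qed.

Definition zero0 {R : realType} (s : nat * nat) : R := (Zof s == 0)%N%:R.

Lemma step_zero_ge {R : realType} (p q : R) s : 0 <= p <= 1 -> 0 <= q <= 1 ->
  (1 - p) ^+ (2 * Zof s) <= coop_step p q (@zero0 R) s.
Proof.
move=> p01 q01; rewrite step_Ebin.
rewrite -[X in X <= _](Ebin_const q (2 * (s.1 + s.2)) ((1 - p) ^+ (2 * Zof s))).
apply: Ebin_le => // i.
rewrite /Zof -[X in X <= _]mulr1 -(Ebin_at0 p (2 * minn s.1 s.2) (fun _ => 1)).
apply: Ebin_le => // j; rewrite mulr1 /zero0 /Zof /=.
by case: j => [|j] //=; rewrite minn0.
Qed.

Lemma pt_diff {R : realType} (p q : R) n s : 0 <= p <= 1 -> 0 <= q <= 1 ->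
  (1 - p) ^+ (2 * n) * ((0 < Zof s) && (Zof s < n))%N%:R <=
  0 + 1 * @ind R s + (-1) * coop_step p q (@ind R) s.
Proof.
move=> p01 q01; have [p0 p1] := andP p01.
case: (posnP (Zof s)) => z.
  rewrite (step_dead p q (@ind R) s z); last by move=> i; rewrite /ind /Zof minn0.
  by rewrite /ind z /= !mulr0 !addr0.
rewrite add0r mul1r {1}/ind z /=.
have -> : coop_step p q (@ind R) s = 1 + (-1) * coop_step p q (@zero0 R) s + 0 * coop_step p q (@zero0 R) s.
  rewrite -step_lin; apply: step_ext => s'; rewrite /ind /zero0.
  by case: (posnP (Zof s')) => z' /=; rewrite ?z' /=; ring.
rewrite mul0r addr0 !mulN1r opprD opprK addrA subrr add0r.
have zs := step_zero_ge p q s p01 q01.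
case: ltnP => zn /=.
  rewrite mulr1; apply: le_trans zs; apply: ler_wiXn2l; rewrite ?subr_ge0 ?lerBlDr ?lerDl //.
  by rewrite leq_mul2l ltnW.
rewrite mulr0; apply: le_trans zs; apply: exprn_ge0; by rewrite subr_ge0.
Qed.

Lemma pt_floor {R : realType} (rho : R) N s : 0 < rho -> rho <= 1 -> (1 <= N)%N ->
  3 + (- 3 / rho ^+ (3 * N)) * rho ^+ (Zof s %/ 1) + 0 * rho ^+ (Zof s %/ 1) <= (Zof s %/ N)%N%:R.
Proof.
move=> r0 r1 N0; rewrite divn1 mul0r addr0.
have r3 : 0 < rho ^+ (3 * N) by apply: exprn_gt0.
have rZ : 0 < rho ^+ Zof s by apply: exprn_gt0.
case: (leqP (3 * N) (Zof s)) => h.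
  have : (3 <= Zof s %/ N)%N.
    by apply: leq_trans (leq_div2r N h); rewrite mulnK.
  rewrite -(ler_nat R) => h3.
  have : 0 <= 3 / rho ^+ (3 * N) * rho ^+ Zof s by apply: mulr_ge0; [apply: divr_ge0; [by []|exact: ltW]|exact: ltW].
  rewrite mulNr mulNr; lra.
have : rho ^+ (3 * N) <= rho ^+ Zof s by apply: ler_wiXn2l => //; [exact: ltW|exact: ltnW].
move=> hle.
have : 1 <= rho ^+ Zof s / rho ^+ (3 * N) by rewrite ler_pdivlMr // mul1r.
have -> : - 3 / rho ^+ (3 * N) * rho ^+ Zof s = - 3 * (rho ^+ Zof s / rho ^+ (3 * N)).
  by rewrite mulrAC -mulrA.
have : 0 <= (Zof s %/ N)%N%:R :> R by [].
lra.
Qed.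

Lemma dir_a_b {R : realType} (p q : R) (hp : 0 < p < 1) (hq : 0 < q < 1) :
  0 < coop_tau_inf p q (1%N, 1%N) ->
  exists N T : nat, (1 <= N)%N /\ (1 <= T)%N /\
    1 < coop_expect p q T (fun s => (Zof s %/ N)%N%:R) (N, N).
Proof.
move=> sig0.
have p01 : 0 <= p <= 1 by case/andP: hp => x y; rewrite ltW // ltW.
have q01 : 0 <= q <= 1 by case/andP: hq => x y; rewrite ltW // ltW.
have cu := u_cvg p q (1%N, 1%N) p01 q01.
set sig := coop_tau_inf p q (1%N, 1%N) in sig0.
have uge : forall n, sig <= coop_expect p q n (@ind R) (1%N, 1%N).
  move=> n; rewrite -surv_expect; apply: (nonincreasing_cvgn_ge _ cu).
  by move=> a b ab; rewrite !surv_expect; exact: surv_decr.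
have sig1 : sig <= 1 by have := uge 0%N; rewrite /coop_expect /= /ind /=.
set rho := 1 - sig / 8.
have r0 : 0 < rho by rewrite /rho; lra.
have r1 : rho < 1 by rewrite /rho; lra.
have r3 : 1 - sig / 2 < rho ^+ 3.
  by rewrite !exprS expr0 mulr1 /rho; nra.
have rr : 0 <= rho < 1 by rewrite ltW.
have s4 : 0 < sig / 4 by lra.
have [n [n1 rn]] := exists_pow_lt rho (sig / 4) rr s4.
set del := (1 - p) ^+ (2 * n).
have del0 : 0 < del by apply: exprn_gt0; case/andP: hp => _ x; rewrite subr_gt0.
have sd : sig < sig + del * sig / 8.
  have : 0 < del * sig / 8 by apply: divr_gt0 => //; exact: mulr_gt0.
  lra.
have [T0 _ HT0] := cvgr_lt _ cu (sig + del * sig / 8) sd.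
set T := T0.+1.
have uT : coop_expect p q T (@ind R) (1%N, 1%N) < sig + del * sig / 8.
  by rewrite -surv_expect; apply: HT0; rewrite /= /T leqnSn.
set a := fun s => ((0 < Zof s) && (Zof s < n))%N%:R : R.
have diff : del * coop_expect p q T a (1%N, 1%N) <=
    coop_expect p q T (@ind R) (1%N, 1%N) - coop_expect p q T.+1 (@ind R) (1%N, 1%N).
  have := expect_lin p q T 0 del 0 a a (1%N, 1%N); rewrite !mul0r add0r addr0 => <-.
  rewrite expectS.
  have := expect_lin p q T 0 1 (-1) (@ind R) (coop_step p q (@ind R)) (1%N, 1%N).
  rewrite add0r mul1r mulN1r => <-.
  apply: expect_le => // s; rewrite mul0r !addr0 add0r.
  have := pt_diff p q n s p01 q01; rewrite add0r mul1r mulN1r; exact.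
have Ea : coop_expect p q T a (1%N, 1%N) < sig / 8.
  have u1 := uge T.+1.
  have : del * coop_expect p q T a (1%N, 1%N) < del * sig / 8 by lra.
  by rewrite -mulrA ltr_pM2l.
set g := fun s : nat * nat => rho ^+ (Zof s %/ 1).
have gle : coop_expect p q T g (1%N, 1%N) < rho ^+ 3.
  apply: le_lt_trans (_ : _ <= coop_expect p q T (fun s => (1 + rho ^+ n) + (-1) * @ind R s + 1 * a s) (1%N, 1%N)) _.
    apply: expect_le => // s; rewrite /g /a /ind divn1 mulN1r mul1r.
    case: (posnP (Zof s)) => z.
      rewrite z expr0 /=; have : 0 <= rho ^+ n by apply: exprn_ge0; exact: ltW.
      lra.
    rewrite /=; case: ltnP => zn.
      have : rho ^+ Zof s <= 1 by apply: exprn_ile1; apply: ltW.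
      have : 0 <= rho ^+ n by apply: exprn_ge0; exact: ltW.
      rewrite /=; lra.
    have : rho ^+ Zof s <= rho ^+ n by apply: ler_wiXn2l; rewrite ?ltW.
    rewrite /=; lra.
  rewrite expect_lin; have := uge T; lra.
set gv := coop_expect p q T g (1%N, 1%N) in gle.
have r01 : 0 <= rho <= 1 by rewrite !ltW.
have gg : goodf g := goodf_pow rho 1 r01 isT.
have hg := iter_good p q g T p01 q01 gg.
have gv0 : 0 <= gv by case/andP: (hg.1 (1%N, 1%N)).
set c := gv / rho ^+ 3.
have r30 : 0 < rho ^+ 3 by apply: exprn_gt0.
have c01 : 0 <= c < 1.
  apply/andP; split; first by apply: divr_ge0 => //; exact: ltW.
  by rewrite /c ltr_pdivrMr // mul1r.
have t3 : 0 < 2 / 3 :> R by lra.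
have [N [N1 cN]] := exists_pow_lt c (2 / 3) c01 t3.
exists N, T; split => //; split => //.
have hNN : coop_expect p q T g (N, N) <= gv ^+ N.
  by have := good_mul _ 1 1 N hg; rewrite !muln1.
apply: lt_le_trans (_ : coop_expect p q T (fun s => 3 + (- 3 / rho ^+ (3 * N)) * g s + 0 * g s) (N, N) <= _).
  rewrite expect_lin mul0r addr0.
  have : c ^+ N = gv ^+ N / rho ^+ (3 * N) by rewrite /c expr_div_n exprM.
  have rN : 0 < rho ^+ (3 * N) by apply: exprn_gt0.
  have : - 3 / rho ^+ (3 * N) * coop_expect p q T g (N, N) >= - 3 / rho ^+ (3 * N) * gv ^+ N.
    by rewrite ler_nM2l // mulNr oppr_lt0 divr_gt0.
  rewrite mulNr mulNr => h1 h2.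
  have : 3 / rho ^+ (3 * N) * gv ^+ N = 3 * c ^+ N by rewrite h2 mulrAC mulrA.
  lra.
apply: expect_le => // s; rewrite /g; apply: pt_floor => //; exact: ltW.
Qed.

Theorem lemma3 (R : realType) (p q : R)
  (hp : 0 < p < 1) (hq : 0 < q < 1) :
  0 < coop_tau_inf p q (1%N, 1%N) <->
  exists N T : nat, (1 <= N)%N /\ (1 <= T)%N /\
    1 < coop_expect p q T (fun s => (Zof s %/ N)%N%:R) (N, N).
Proof.
split; first exact: dir_a_b.
by case=> N [T [N1 [T1 H]]]; exact: (@dir_b_a R p q hp hq N T N1 T1 H).
Qed.
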